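(* Let $P$ be a finite abelian $p$-group. Then $\mathrm{Perf}(\mathcal{O}P)\cong \mathrm{Aut}(\mathcal{O}P)\times C_2$.
   Context: $(K,\mathcal{O},k)$ is a $p$-modular system with $k$ algebraically closed of characteristic $p$. For a block $B$, $\mathrm{Perf}(B)$ is the group (under composition) of perfect self-isometries of $B$ in the sense of Broué: isometries $I:\mathbb{Z}\mathrm{Irr}(B)\to\mathbb{Z}\mathrm{Irr}(B)$ whose associated generalized character $\mu(g,h)=\sum_{\chi}I(\chi)(g)\chi(h^{-1})$ is perfect. $\mathrm{Aut}(\mathcal{O}P)$ is the group of $\mathcal{O}$-algebra automorphisms of $\mathcal{O}P$. *)

(* Defs.v *)
From HB Require Import structures.
From mathcomp Require Import all_boot all_order all_algebra all_fingroup all_solvable all_field all_character.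
Set Implicit Arguments. Unset Strict Implicit. Unset Printing Implicit Defensive.
Import Order.TTheory GRing.Theory Num.Theory.
Local Open Scope ring_scope.

Definition dvdr (R : comNzRingType) (a b : R) : Prop := exists c, b = c * a.

(* O is a complete discrete valuation ring of characteristic 0, with
   uniformizer pi, whose residue field k = O/(pi) is algebraically closed of
   characteristic p.  K = Frac(O). *)
Definition pmodular_ring (O : idomainType) (p : nat) : Prop :=
  (forall n : nat, n%:R = 0 :> O -> n = 0%N) /\
      exists pi : O,
        [/\ pi != 0 /\ pi \isn't a GRing.unit,
            forall x : O, x != 0 -> exists n u, u \is a GRing.unit /\ x = u * pi ^+ n,
            forall x : nat -> O, (forall n, dvdr (pi ^+ n) (x n.+1 - x n)) ->
               exists l, forall n, dvdr (pi ^+ n) (l - x n),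
            (* residue field has characteristic p *)
            dvdr pi (p%:R) &
            (* residue field is algebraically closed *)
            forall q : {poly O}, q \is monic -> (1 < size q)%N ->
               exists a, dvdr pi q.[a]].

(* K (equivalently O) contains a primitive exponent(P)-th root of unity,
   i.e. K is a splitting field for the abelian group P. *)
Definition large_enough (O : idomainType) (gT : finGroupType) : Prop :=
  exists z : O, (exponent [set: gT]).-primitive_root z.

Notation galg O gT := {ffun gT -> O} (only parsing).

Definition galg_mul (O : idomainType) (gT : finGroupType) (a b : galg O gT)
  : galg O gT := [ffun x => \sum_(y : gT) a y * b (y^-1 * x)%g].

Definition galg_one (O : idomainType) (gT : finGroupType) : galg O gT :=
  [ffun x => (x == 1%g)%:R].

Definition is_alg_aut (O : idomainType) (gT : finGroupType)
    (f : galg O gT -> galg O gT) : Prop :=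
  [/\ forall (c : O) (a b : galg O gT), f [ffun x => c * a x + b x] = [ffun x => c * f a x + f b x],
      forall a b, f (galg_mul a b) = galg_mul (f a) (f b),
      f (galg_one O gT) = galg_one O gT &
      bijective f].

(* An element of O ∩ Q(zeta) viewed in algC: p-integral algebraic number. *)
Definition p_integral (p : nat) (x : algC) : Prop :=
  exists m : nat, coprime m p /\ m%:R * x \in Aint.

Section Iso.
Variable gT : finGroupType.
Local Notation G := [set: gT]%G.

Definition is_isometry (I : {ffun Iirr G -> 'CF(G)}) : Prop :=
  (forall i, I i \in ('Z[irr G])%g) /\
  (forall i j, '[I i, I j] = (i == j)%:R).

Definition iso_ext (I : {ffun Iirr G -> 'CF(G)}) (psi : 'CF(G)) : 'CF(G) :=
  \sum_i '[psi, 'chi_i] *: I i.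

Definition iso_comp (I J : {ffun Iirr G -> 'CF(G)}) : {ffun Iirr G -> 'CF(G)} :=
  [ffun i => iso_ext I (J i)].

Definition iso_mu (I : {ffun Iirr G -> 'CF(G)}) (g h : gT) : algC :=
  \sum_i (I i) g * 'chi_i (h^-1)%g.

Definition is_perfect (p : nat) (I : {ffun Iirr G -> 'CF(G)}) : Prop :=
  forall g h : gT,
   (iso_mu I g h != 0 -> ((p^'.-elt g)%g = (p^'.-elt h)%g)) /\
   p_integral p (iso_mu I g h / #|('C[g])%g|%:R) /\
   p_integral p (iso_mu I g h / #|('C[h])%g|%:R).

Definition Perf (p : nat) (I : {ffun Iirr G -> 'CF(G)}) : Prop :=
  is_isometry I /\ is_perfect p I.

End Iso.

(* Main.v *)
Require Import Defs.
From HB Require Import structures.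
From mathcomp Require Import all_boot all_order all_algebra all_fingroup all_solvable all_field all_character.
From mathcomp Require Import ring lra.
Set Implicit Arguments. Unset Strict Implicit. Unset Printing Implicit Defensive.
Import Order.TTheory GRing.Theory Num.Theory.
Local Open Scope ring_scope.

Definition pev (R : comNzRingType) (x : R) (P : {poly int}) : R := (map_poly intr P).[x].
Lemma pevM (R : comNzRingType) (x : R) P Q : pev x (P * Q) = pev x P * pev x Q.
Proof. by rewrite /pev rmorphM hornerM. Qed.
Lemma pevD (R : comNzRingType) (x : R) P Q : pev x (P + Q) = pev x P + pev x Q.
Proof. by rewrite /pev rmorphD hornerD. Qed.
Lemma pevB (R : comNzRingType) (x : R) P Q : pev x (P - Q) = pev x P - pev x Q.
Proof. by rewrite /pev rmorphB hornerD hornerN. Qed.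
Lemma pevX (R : comNzRingType) (x : R) : pev x 'X = x.
Proof. by rewrite /pev map_polyX hornerX. Qed.
Lemma pevXn (R : comNzRingType) (x : R) n : pev x 'X^n = x ^+ n.
Proof. by rewrite /pev map_polyXn hornerXn. Qed.
Lemma pevC (R : comNzRingType) (x : R) c : pev x c%:P = c%:~R.
Proof. by rewrite /pev map_polyC hornerC. Qed.
Lemma pev_prod (R : comNzRingType) (x : R) (I : Type) (r : seq I) (F : I -> {poly int}) :
  pev x (\prod_(i <- r) F i) = \prod_(i <- r) pev x (F i).
Proof. by rewrite /pev rmorph_prod horner_prod. Qed.
Lemma pev_sum (R : comNzRingType) (x : R) (I : Type) (r : seq I) (F : I -> {poly int}) :
  pev x (\sum_(i <- r) F i) = \sum_(i <- r) pev x (F i).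
Proof. by rewrite /pev rmorph_sum horner_sum. Qed.
Lemma pev_morph (R S : comNzRingType) (f : {rmorphism R -> S}) (x : R) P :
  pev (f x) P = f (pev x P).
Proof.
rewrite /pev -horner_map /= -map_poly_comp; congr (_.[_]).
by apply: eq_map_poly => c /=; rewrite rmorph_int.
Qed.

Lemma prod_const_seq (R : comNzRingType) (I : Type) (s : seq I) (c : R) :
  \prod_(i <- s) c = c ^+ size s.
Proof. by elim: s => [|a s IH]; rewrite ?big_nil ?big_cons ?IH ?exprS. Qed.

Section KeySec.
Variables (p k : nat).
Hypothesis pr_p : prime p.

Definition Jset := [seq i <- iota 0 (p ^ k.+1) | ~~ (p %| i)%N].
Definition Bpol : {poly int} := \prod_(i <- Jset) \sum_(l < i) 'X^l.
Definition invJ i := (i ^ (totient (p ^ k.+1)).-1)%N.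
Definition Apol : {poly int} := \prod_(i <- Jset) \sum_(l < invJ i) 'X^(i * l).
Definition dK := size Jset.

Lemma key_field (F : fieldType) (z : F) : (p ^ k.+1).-primitive_root z ->
  p%:R = (1 - z) ^+ dK * pev z Bpol /\ (1 - z) ^+ dK = p%:R * pev z Apol.
Proof.
move=> prim.
have p_gt0 : (0 < p)%N := prime_gt0 pr_p.
set e := (p ^ k.+1)%N; set m := (p ^ k)%N.
have em : e = (p * m)%N by rewrite /e expnS.
have m_gt0 : (0 < m)%N by rewrite expn_gt0 p_gt0.
have primm : m.-primitive_root (z ^+ p).
  have := dvdn_prim_root prim (_ : (m %| e)%N); rewrite -/e em mulnK //.
  by apply; apply: dvdn_mull.
have hsplit : 'X^e - 1 = ('X^m - 1) * \prod_(i <- Jset) ('X - (z ^+ i)%:P).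
  rewrite -(factor_Xn_sub_1 prim) /index_iota subn0.
  rewrite (bigID (fun i => (p %| i)%N)) /=; congr (_ * _); last by rewrite big_filter.
  rewrite -(factor_Xn_sub_1 primm) /index_iota subn0 -big_filter.
  have -> : [seq i <- iota 0 e | (p %| i)%N] = [seq (p * j)%N | j <- iota 0 m].
    apply: (irr_sorted_eq (leT := ltn)).
    - exact: ltn_trans.
    - exact: ltnn.
    - by apply: sorted_filter; [exact: ltn_trans | exact: iota_ltn_sorted].
    - rewrite sorted_map; apply: sub_sorted (iota_ltn_sorted 0 m).
      by move=> a b /=; rewrite ltn_pmul2l.
    move=> i; rewrite mem_filter mem_iota add0n; apply/andP/mapP.
      case=> /dvdnP [j ->] lt; exists j; last by rewrite mulnC.
      by rewrite mem_iota add0n -(ltn_pmul2l p_gt0) -em mulnC.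
    case=> j; rewrite mem_iota add0n => ltj ->; split; first exact: dvdn_mulr.
    by rewrite em ltn_pmul2l.
  by rewrite big_map; apply: eq_bigr => j _; rewrite exprM.
have hPhi : 'X^e - 1 = ('X^m - 1) * \sum_(l < p) ('X^m) ^+ l :> {poly F}.
  by rewrite -subrX1 -exprM mulnC -em.
have hprod : \prod_(i <- Jset) ('X - (z ^+ i)%:P) = \sum_(l < p) ('X^m) ^+ l :> {poly F}.
  apply: (@mulfI _ ('X^m - 1)); last by rewrite -hsplit.
  by rewrite -size_poly_eq0 size_XnsubC.
have hp : p%:R = \prod_(i <- Jset) (1 - z ^+ i) :> F.
  have := congr1 (fun P => P.[1]) hprod; rewrite horner_prod horner_sum /=.
  under eq_bigr do rewrite hornerXsubC.
  under [X in _ = X -> _]eq_bigr do rewrite -exprM hornerXn expr1n.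
  by rewrite sumr_const card_ord => ->.
have hJ i : i \in Jset -> coprime i e.
  rewrite mem_filter => /andP[ndv _].
  by rewrite /e coprime_pexpr // coprime_sym prime_coprime.
have sub1 (x : F) n : 1 - x ^+ n = (1 - x) * \sum_(l < n) x ^+ l.
  by rewrite -opprB subrX1 -mulNr opprB.
split.
  rewrite hp pev_prod /dK -prod_const_seq -big_split /=; apply: eq_bigr => i _.
  rewrite pev_sum sub1; congr (_ * _); apply: eq_bigr => l _.
  by rewrite pevXn.
rewrite hp pev_prod -big_split /= /dK -prod_const_seq.
apply: eq_big_seq => i iJ.
rewrite pev_sum.
have -> : \sum_(l < invJ i) pev z 'X^(i * l) = \sum_(l < invJ i) (z ^+ i) ^+ l.
  by apply: eq_bigr => l _; rewrite pevXn exprM.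
rewrite -sub1 -exprM.
have t_gt0 : (0 < totient e)%N by rewrite totient_gt0 expn_gt0 p_gt0.
have -> : (i * invJ i = i ^ totient e)%N by rewrite /invJ -expnS prednK.
by rewrite -(prim_expr_mod prim) Euler_exp_totient ?hJ // modn_small ?expr1 // /e
  (ltn_exp2l 0) ?prime_gt1.
Qed.
Lemma key_idom (R : idomainType) (z : R) : (p ^ k.+1).-primitive_root z ->
  p%:R = (1 - z) ^+ dK * pev z Bpol /\ (1 - z) ^+ dK = p%:R * pev z Apol.
Proof.
move=> prim.
have eqF n : n.-unity_root (tofrac z) = n.-unity_root z.
  by rewrite !unity_rootE -[in RHS]tofrac_eq tofracXn tofrac1.
have primF : (p ^ k.+1).-primitive_root (tofrac z).
  move: prim; rewrite /primitive_root_of_unity => /andP[e0 /forallP H].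
  rewrite e0 /=; apply/forallP => i; rewrite eqF; apply: H.
have [h1 h2] := key_field primF.
move: h1 h2; rewrite !(pev_morph (@tofrac R : {rmorphism _ -> _})) /= -(rmorph_nat (@tofrac R)) -(rmorph1 (@tofrac R)).
rewrite -!rmorphB -!rmorphXn -!rmorphM => /eqP h1 /eqP h2.
by rewrite !tofrac_eq in h1 h2; split; apply/eqP.
Qed.
End KeySec.

Lemma pev1 (R : comNzRingType) (x : R) : pev x 1 = 1.
Proof. by rewrite /pev rmorph1 hornerC. Qed.
Lemma pevXX (R : comNzRingType) (x : R) P n : pev x (P ^+ n) = pev x P ^+ n.
Proof. by rewrite /pev rmorphXn horner_exp. Qed.
Lemma pev_Aint (w : algC) Q : w \in Aint -> pev w Q \in Aint.
Proof.
move=> wA; apply: rpred_horner => //.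
by apply/polyOverP => i; rewrite coef_map /= rpred_int.
Qed.

Lemma split1 (Q : {poly int}) : exists T : {poly int},
  forall (R : comNzRingType) (x : R), pev x Q = (Q.[1])%:~R + (x - 1) * pev x T.
Proof.
have : root (Q - (Q.[1])%:P) 1 by rewrite rootE hornerD hornerN hornerC subrr.
case/factor_theorem => T hT; exists T => R x.
have hQ : Q = T * ('X - 1%:P) + (Q.[1])%:P by rewrite -hT subrK.
by rewrite {1}hQ pevD pevM pevB pevX pevC pev1 mulrC addrC.
Qed.

Section Extract.
Variables (p k : nat).
Hypothesis pr_p : prime p.
Local Notation dK := (dK p k).
Local Notation Bpol := (Bpol p k).
Local Notation Apol := (Apol p k).
Definition Good (R : comNzRingType) (x : R) :=
  p%:R = (1 - x) ^+ dK * pev x Bpol /\ (1 - x) ^+ dK = p%:R * pev x Apol.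
Definition Kpol : {poly int} := (1 - 'X) ^+ dK.-1 * Bpol.

Lemma dK_gt0 : (0 < dK)%N.
Proof.
rewrite /dK /Jset size_filter -has_count; apply/hasP; exists 1%N.
  by rewrite mem_iota add0n (ltn_exp2l 0) ?prime_gt1.
by rewrite /= dvdn1 neq_ltn prime_gt1 ?orbT.
Qed.

Lemma good_K (R : comNzRingType) (x : R) : Good x -> p%:R = (1 - x) * pev x Kpol.
Proof.
case=> -> _; rewrite /Kpol pevM pevXX pevB pev1 pevX mulrA -exprS prednK //.
exact: dK_gt0.
Qed.

Lemma extract N (P : {poly int}) : exists j (Q : {poly int}),
  (j = N \/ (j < N)%N /\ ~~ (p%:Z %| Q.[1])%Z) /\
  forall (R : comNzRingType) (x : R), Good x -> pev x P = (1 - x) ^+ j * pev x Q.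
Proof.
elim: N => [|N [j [Q [hj hQ]]]].
  by exists 0%N, P; split; [left | move=> R x _; rewrite expr0 mul1r].
case: hj => [hjN | [ltj ndv]]; last first.
  by exists j, Q; split => //; right; split => //; apply: ltnW.
subst j.
have [ndv | dv] := boolP (p%:Z %| Q.[1])%Z; last first.
  by exists N, Q; split => //; right.
have [T hT] := split1 Q.
exists N.+1, ((Q.[1] %/ p%:Z)%Z%:P * Kpol - T); split; first by left.
set t := (Q.[1] %/ p%:Z)%Z.
move=> R x gx; rewrite hQ // hT -(divzK ndv) -/t intrM /=.
rewrite pevB pevM pevC exprSr -mulrA; congr (_ * _).
rewrite (_ : p%:~R = p%:R) // (good_K gx).
by ring.
Qed.
End Extract.

Lemma prim_neq1 (R : nzRingType) n (x : R) : (1 < n)%N -> n.-primitive_root x -> 1 - x != 0.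
Proof.
move=> n1 prim; rewrite subr_eq0; apply/eqP => h.
have := eq_prim_root_expr prim 1 0; rewrite expr1 expr0 -h eqxx.
by rewrite /eqn mod0n modn_small.
Qed.

Section Transfer.
Variables (p k : nat).
Hypothesis pr_p : prime p.
Local Notation dK := (dK p k).
Local Notation Bpol := (Bpol p k).
Local Notation Apol := (Apol p k).

Lemma notdvd_coprimez (n : int) : ~~ (p%:Z %| n)%Z -> coprimez (n ^+ dK) p%:Z.
Proof.
move=> ndv; apply: coprimezXl; rewrite coprimezE coprime_sym prime_coprime //.
Qed.

Lemma transfer (O : idomainType) (pi : O) (w : algC) (z : O) (P : {poly int}) (r : nat) :
  ~~ (pi \is a GRing.unit) -> dvdr pi (p%:R : O) ->
  (p ^ k.+1).-primitive_root w -> (p ^ k.+1).-primitive_root z ->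
  (exists c : O, pev z P = c * p%:R ^+ r) <-> p_integral p (pev w P / p%:R ^+ r).
Proof.
move=> npi [cpi hpi] primw primz.
have e1 : (1 < p ^ k.+1)%N by rewrite (ltn_exp2l 0) ?prime_gt1.
have gw : Good p k w := key_idom pr_p primw.
have gz : Good p k z := key_idom pr_p primz.
have w1 := prim_neq1 e1 primw; have z1 := prim_neq1 e1 primz.
have wA : w \in Aint by apply: (Aint_unity_root (ltnW e1)); rewrite unity_rootE (prim_expr_order primw).
have p0 : (p%:R : algC) != 0 by rewrite pnatr_eq0 -lt0n prime_gt0.
have [j [Q [hj hQ]]] := @extract p k pr_p (dK * r) P.
case: hj => [hjN | [ltj ndv]].
  subst j; split => _.
    exists 1%N; split; first exact: coprime1n.
    rewrite mul1r hQ // exprM (proj2 gw) exprMn mulrAC [_ ^+ r * _ / _]mulrAC divff.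
      by rewrite mul1r rpredM ?rpredX ?pev_Aint.
    by rewrite expf_neq0.
  by exists (pev z Apol ^+ r * pev z Q); rewrite hQ // exprM (proj2 gz) exprMn; ring.
have [T hT] := split1 Q.
set n := Q.[1] in ndv hT.
have cop := notdvd_coprimez ndv.
have [u [v huv]] := Bezoutz (n ^+ dK) p%:Z.
move: huv; rewrite (eqP cop) => huv.
set D := (dK * r - j)%N.
have hD : (dK * r = j + D)%N by rewrite subnKC // ltnW.
have D0 : (0 < D)%N by rewrite subn_gt0.
split => H; exfalso.
  case: H => c hc.
  have hQz : pev z Q = (1 - z) * (c * (1 - z) ^+ D.-1 * pev z Bpol ^+ r).
    have eD : (1 - z) ^+ D = (1 - z) * (1 - z) ^+ D.-1 by rewrite -exprS prednK.
    apply: (mulfI (expf_neq0 j z1)); rewrite -hQ // hc (proj1 gz) exprMn -exprM hD exprD eD.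
    ring.
  have hn : n%:~R = (1 - z) * (c * (1 - z) ^+ D.-1 * pev z Bpol ^+ r + pev z T).
    by rewrite -[n%:~R](addrK ((z - 1) * pev z T)) -hT hQz; ring.
  have : (p%:R : O) * (u%:~R * pev z Apol * (c * (1 - z) ^+ D.-1 * pev z Bpol ^+ r + pev z T) ^+ dK + v%:~R) = 1.
    have h1 := congr1 (fun t : int => t%:~R : O) huv.
    rewrite /= intrD !intrM rmorphXn /= hn exprMn (proj2 gz) in h1.
    rewrite [RHS](_ : _ = (1:int)%:~R) // -h1 (_ : (p%:Z)%:~R = p%:R) //; ring.
  move=> hu; apply: (negP npi); apply/unitrPr; exists (cpi * (u%:~R * pev z Apol *
    (c * (1 - z) ^+ D.-1 * pev z Bpol ^+ r + pev z T) ^+ dK + v%:~R)).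
  by rewrite mulrA [pi * _]mulrC -hpi.
case: H => mm [copm hm].
pose a := mm%:R * (pev w P / p%:R ^+ r).
have ha : a \in Aint by [].
have hmP : mm%:R * pev w P = a * p%:R ^+ r by rewrite /a -mulrA mulfVK // expf_neq0.
clearbody a.
have hQw : mm%:R * pev w Q = (1 - w) * (a * (1 - w) ^+ D.-1 * pev w Bpol ^+ r).
  have eD : (1 - w) ^+ D = (1 - w) * (1 - w) ^+ D.-1 by rewrite -exprS prednK.
  apply: (mulfI (expf_neq0 j w1)); rewrite mulrCA -hQ // hmP (proj1 gw) exprMn -exprM hD exprD eD.
  ring.
set Y := a * (1 - w) ^+ D.-1 * pev w Bpol ^+ r + mm%:R * pev w T.
have YA : Y \in Aint.
  have mA : (mm%:R : algC) \in Aint := Aint_Cint (natr_int _ mm).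
  have h1w : 1 - w \in Aint by rewrite rpredB.
  have hB : pev w Bpol ^+ r \in Aint by rewrite rpredX ?pev_Aint.
  have hD1 : (1 - w) ^+ D.-1 \in Aint by rewrite rpredX.
  have hT1 : pev w T \in Aint by rewrite pev_Aint.
  by rewrite /Y rpredD ?rpredM.
have hn : (mm%:Z * n)%:~R = (1 - w) * Y.
  rewrite intrM /= /Y -[n%:~R](addrK ((w - 1) * pev w T)) -hT.
  rewrite (_ : (mm%:Z)%:~R = mm%:R) // mulrBr hQw; ring.
have hX : ((mm%:Z * n) ^+ dK)%:~R / p%:R = pev w Apol * Y ^+ dK.
  by rewrite rmorphXn /= hn exprMn (proj2 gw) mulrAC [_ * _ / _]mulrAC divff // mul1r.
have : ((mm%:Z * n) ^+ dK)%:~R / (p%:R : algC) \is a Num.int.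
  apply: Cint_rat_Aint; first by rewrite rpred_div ?rpred_int ?rpred_nat.
  by rewrite hX rpredM ?rpredX ?pev_Aint.
case/intrP => q hq.
have : ((mm%:Z * n) ^+ dK) = q * p%:Z.
  apply: (@intr_inj algC); rewrite intrM -hq (_ : (p%:Z)%:~R = p%:R) // mulfVK //.
move=> hq'.
have : (p %| `|(mm%:Z * n) ^+ dK|)%N by rewrite hq' abszM dvdn_mull.
rewrite abszX abszM Euclid_dvdX // Euclid_dvdM // => /andP[/orP[] hp _].
  by move: copm; rewrite coprime_sym prime_coprime // hp.
by move: ndv; rewrite dvdzE hp.
Qed.
End Transfer.
Section Chars.
Variables (gT : finGroupType) (O : idomainType) (w : algC) (z : O).
Local Notation G := [set: gT]%G.
Local Notation e := (exponent [set: gT]).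
Hypothesis abG : abelian [set: gT].
Hypothesis primw : e.-primitive_root w.
Hypothesis primz : e.-primitive_root z.
Hypothesis char0 : forall n : nat, n%:R = 0 :> O -> n = 0%N.

Lemma linG (i : Iirr G) : 'chi_i \is a linear_char.
Proof. by move/char_abelianP: abG. Qed.

Definition kexp (i : Iirr G) (g : gT) : nat :=
  odflt 0%N (omap val [pick k : 'I_e | 'chi_i g == w ^+ k]).

Lemma chiE i g : 'chi_i g = w ^+ kexp i g.
Proof.
rewrite /kexp; case: pickP => [k /eqP -> // | none].
have : 'chi_i g ^+ e = 1.
  by rewrite -lin_charX ?linG ?inE // expg_exponent ?inE // lin_char1 ?linG.
case/(prim_rootP primw) => k hk.
by have := none k; rewrite hk eqxx.
Qed.

Definition th (i : Iirr G) (g : gT) : O := z ^+ kexp i g.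

Lemma wz_eq a b : (w ^+ a == w ^+ b) = (z ^+ a == z ^+ b).
Proof. by rewrite (eq_prim_root_expr primw) (eq_prim_root_expr primz). Qed.

Lemma thM i g h : th i (g * h) = th i g * th i h.
Proof.
apply/eqP; rewrite /th -exprD -wz_eq exprD -!chiE.
by rewrite lin_charM ?linG ?inE.
Qed.

Lemma th1 i : th i 1 = 1.
Proof.
apply/eqP; rewrite /th -(expr0 z) -wz_eq expr0 -chiE.
by rewrite lin_char1 ?linG.
Qed.

Lemma thV i g : th i g^-1 * th i g = 1.
Proof. by rewrite -thM mulVg th1. Qed.

Lemma thVr i g : th i g * th i g^-1 = 1.
Proof. by rewrite -thM mulgV th1. Qed.

Lemma th_inj i j : (forall g, th i g = th j g) -> i = j.
Proof.
move=> h; apply: irr_inj; apply/cfunP => g.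
by rewrite !chiE; apply/eqP; rewrite wz_eq; apply/eqP; apply: h.
Qed.

Lemma th_mul i j : exists l, forall g, th l g = th i g * th j g.
Proof.
have /irrP [l hl] := mul_lin_irr (linG i) (mem_irr j).
exists l => g; apply/eqP; rewrite /th -exprD -wz_eq exprD -!chiE -hl.
by rewrite cfunE.
Qed.

Lemma nG0 : (#|G|%:R : O) != 0.
Proof. by apply/eqP => /char0 h; have := cardG_gt0 G; rewrite h. Qed.

Lemma NirrG : Nirr G = #|G|.
Proof. by rewrite NirrE; apply/eqP; rewrite -card_classes_abelian. Qed.

Lemma hom_sum0 (f : gT -> O) g0 : (forall g h, f (g * h)%g = f g * f h) -> f g0 != 1 ->
  \sum_g f g = 0.
Proof.
move=> fM fg0.
have : \sum_g f g = f g0 * \sum_g f g.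
  rewrite mulr_sumr (reindex_inj (mulgI g0)) /=.
  by apply: eq_bigr => g _; rewrite fM.
move/eqP; rewrite -subr_eq0 -{1}[\sum_g f g]mul1r -mulrBl mulf_eq0 subr_eq0 eq_sym.
by rewrite (negPf fg0) /= => /eqP.
Qed.

Lemma chi_sum g : \sum_i 'chi[G]_i g = (#|G| * (g == 1%g))%:R.
Proof.
have := cfRegE G g; rewrite cfReg_sum sum_cfunE natrM mulr_natr => <-.
by apply: eq_bigr => i _; rewrite cfunE lin_char1 ?linG ?mul1r.
Qed.

Lemma col_sum g : \sum_i th i g = (#|G| * (g == 1%g))%:R.
Proof.
have [-> | ng1] := eqVneq g 1%g.
  under eq_bigr do rewrite th1.
  by rewrite sumr_const card_ord NirrG muln1.
rewrite muln0.
have /existsP [i0 hi0] : [exists i0 : Iirr G, 'chi_i0 g != 1].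
  apply: contraT; rewrite negb_exists => /forallP H.
  have := chi_sum g; rewrite (negPf ng1) muln0.
  under eq_bigr do rewrite (eqP (negbNE (H _))).
  rewrite sumr_const card_ord NirrG => /eqP; rewrite eqr_nat => /eqP h.
  by have := cardG_gt0 G; rewrite h.
have hti0 : th i0 g != 1.
  by move: hi0; rewrite chiE /th -(expr0 w) -(expr0 z) wz_eq.
have lP i : {l | [forall h, th l h == th i0 h * th i h]}.
  by apply: sigW; have [l hl] := th_mul i0 i; exists l; apply/forallP => h; rewrite hl.
pose l i := sval (lP i).
have hl i h : th (l i) h = th i0 h * th i h by apply/eqP; apply: (forallP (svalP (lP i))).
have linj : injective l.
  move=> i j hij; apply: th_inj => h.
  apply: (mulfI (x := th i0 h)); last by rewrite -!hl hij.
  by apply/eqP => h0; have := thV i0 h; rewrite h0 mulr0 => /eqP; rewrite eq_sym oner_eq0.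
have : \sum_i th i g = th i0 g * \sum_i th i g.
  rewrite mulr_sumr (reindex_inj linj) /=.
  by apply: eq_bigr => i _; rewrite hl.
move/eqP; rewrite -subr_eq0 -{1}[\sum_i th i g]mul1r -mulrBl mulf_eq0 subr_eq0 eq_sym.
by rewrite (negPf hti0) /= => /eqP.
Qed.

Lemma row_sum i j : \sum_g th i g^-1 * th j g = (#|G| * (i == j))%:R.
Proof.
have [<- | nij] := eqVneq i j.
  under eq_bigr do rewrite thV.
  by rewrite sumr_const muln1 cardsT.
rewrite muln0.
have /existsP [g0 hg0] : [exists g, th i g != th j g].
  apply: contraT; rewrite negb_exists => /forallP H; rewrite -(negPf nij); apply/eqP.
  by apply: th_inj => g; apply/eqP; exact: negbNE (H g).
apply: (@hom_sum0 (fun g => th i g^-1 * th j g) g0).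
  by move=> g h; rewrite invMg !thM; ring.
apply: contra hg0 => /eqP h1; apply/eqP.
by rewrite -[th j g0]mul1r -(thVr i g0) -mulrA h1 mulr1.
Qed.


Definition delta (g : gT) : {ffun gT -> O} := [ffun x => (x == g)%:R].
Definition ev (i : Iirr G) (x : {ffun gT -> O}) : O := \sum_g x g * th i g.

Lemma ev_delta i g : ev i (delta g) = th i g.
Proof.
rewrite /ev (bigD1 g) //= big1 => [|h /negPf hg]; first by rewrite ffunE eqxx mul1r addr0.
by rewrite ffunE hg mul0r.
Qed.

Lemma ev_mul i a b : ev i (galg_mul a b) = ev i a * ev i b.
Proof.
rewrite /ev /galg_mul mulr_suml.
under eq_bigr do rewrite ffunE mulr_suml.
rewrite exchange_big /=; apply: eq_bigr => y _.
rewrite mulr_sumr (reindex_inj (mulgI y)) /=; apply: eq_bigr => u _.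
by rewrite mulKg thM; ring.
Qed.

Lemma ev_one i : ev i (galg_one O gT) = 1.
Proof.
rewrite /ev (bigD1 1%g) //= big1 => [|h /negPf hg]; first by rewrite ffunE eqxx mul1r addr0 th1.
by rewrite ffunE hg mul0r.
Qed.

Lemma ev_lin i c (a b : {ffun gT -> O}) : ev i [ffun x => c * a x + b x] = c * ev i a + ev i b.
Proof.
rewrite /ev mulr_sumr -big_split /=; apply: eq_bigr => g _.
by rewrite ffunE; ring.
Qed.

Lemma delta_mul g h : galg_mul (delta g) (delta h) = delta (g * h).
Proof.
apply/ffunP => x; rewrite !ffunE (bigD1 g) //= big1 => [|y /negPf hy]; last first.
  by rewrite ffunE hy mul0r.
rewrite !ffunE eqxx mul1r addr0; congr (_%:R).
by rewrite (canF_eq (mulKVg g)).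
Qed.

Lemma delta1 : delta 1 = galg_one O gT.
Proof. by apply/ffunP => x; rewrite !ffunE. Qed.

Lemma inversion (y : {ffun gT -> O}) g :
  #|G|%:R * y g = \sum_i ev i y * th i g^-1.
Proof.
rewrite /ev; under eq_bigr do rewrite mulr_suml.
rewrite exchange_big /=.
under eq_bigr do (under eq_bigr do rewrite -mulrA -thM; rewrite -mulr_sumr col_sum).
rewrite (bigD1 g) //= big1 => [|h /negPf hg]; last first.
  by rewrite -eq_mulgV1 hg muln0 mulr0.
by rewrite mulgV eqxx muln1 addr0 mulrC.
Qed.

Lemma ev_inj x y : (forall i, ev i x = ev i y) -> x = y.
Proof.
move=> h; apply/ffunP => g; apply: (mulfI nG0).
by rewrite !inversion; apply: eq_bigr => i _; rewrite h.
Qed.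

Lemma hom_is_th (f : gT -> O) : f 1%g = 1 -> (forall g h, f (g * h)%g = f g * f h) ->
  exists i, forall g, f g = th i g.
Proof.
move=> f1 fM.
have [/existsP [i /forallP hi] | none] := boolP [exists i, [forall g, f g == th i g]].
  by exists i => g; apply/eqP.
exfalso; move: none; rewrite negb_exists => /forallP none.
have h0 i : \sum_g f g * th i g^-1 = 0.
  have /existsP [g0 hg0] : [exists g, f g != th i g].
    by move: (none i); rewrite negb_forall.
  apply: (@hom_sum0 (fun g => f g * th i g^-1) g0).
    by move=> g h; rewrite fM invMg thM; ring.
  apply: contra hg0 => /eqP h1; apply/eqP.
  by rewrite -[f g0]mulr1 -(thV i g0) mulrA h1 mul1r.
have : \sum_i \sum_g f g * th i g^-1 = 0 by rewrite big1.
rewrite exchange_big /=.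
under eq_bigr do rewrite -mulr_sumr col_sum.
rewrite (bigD1 1%g) //= big1 => [|h /negPf hh]; last by rewrite invg_eq1 hh muln0 mulr0.
rewrite invg1 eqxx muln1 f1 mul1r addr0 => /eqP; apply/negP; exact: nG0.
Qed.


Lemma lin_expand (f : {ffun gT -> O} -> {ffun gT -> O}) :
  (forall (c : O) (a b : {ffun gT -> O}), f [ffun x => c * a x + b x] = [ffun x => c * f a x + f b x]) ->
  forall x, f x = [ffun u => \sum_g x g * f (delta g) u].
Proof.
move=> hl x.
have f0 : f [ffun => 0] = [ffun => 0].
  have := hl 1 [ffun => 0] [ffun => 0].
  rewrite (_ : [ffun x => 1 * _ + _] = [ffun => 0]); last by apply/ffunP => u; rewrite !ffunE mul1r addr0.
  move=> h; apply/ffunP => u; move/ffunP: h => /(_ u); rewrite !ffunE mul1r => h.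
  by apply: (@addrI _ (f [ffun=> 0] u)); rewrite addr0 -h.
pose S s := [ffun u => \sum_(g <- s) x g * delta g u].
have hS s : f (S s) = [ffun u => \sum_(g <- s) x g * f (delta g) u].
  elim: s => [|g s IH].
    rewrite (_ : S [::] = [ffun => 0]); last by apply/ffunP => u; rewrite !ffunE big_nil.
    by rewrite f0; apply/ffunP => u; rewrite !ffunE big_nil.
  rewrite (_ : S (g :: s) = [ffun u => x g * delta g u + S s u]); last first.
    by apply/ffunP => u; rewrite !ffunE big_cons [delta _ _]ffunE.
  by rewrite hl IH; apply/ffunP => u; rewrite !ffunE big_cons.
have hx : x = S (index_enum gT).
  apply/ffunP => u; rewrite /S ffunE (bigD1 u) //= big1 => [|g /negPf hg]; last first.
    by rewrite /delta ffunE eq_sym hg mulr0.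
  by rewrite /delta ffunE eqxx mulr1 addr0.
by rewrite {1}hx hS.
Qed.

Lemma ev_expand (f : {ffun gT -> O} -> {ffun gT -> O}) i x :
  (forall (c : O) (a b : {ffun gT -> O}), f [ffun x => c * a x + b x] = [ffun x => c * f a x + f b x]) ->
  ev i (f x) = \sum_g x g * ev i (f (delta g)).
Proof.
move=> hl; rewrite (lin_expand hl) /ev.
under eq_bigr do rewrite ffunE mulr_suml.
rewrite exchange_big /=; apply: eq_bigr => g _.
by rewrite mulr_sumr; apply: eq_bigr => u _; rewrite mulrA.
Qed.

Section Aut.
Variable f : {ffun gT -> O} -> {ffun gT -> O}.
Hypothesis hf : is_alg_aut f.

Lemma tau_ex i : exists j, forall g, ev i (f (delta g)) = th j g.
Proof.
case: hf => _ hm h1 _.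
apply: hom_is_th; first by rewrite delta1 h1 ev_one.
by move=> g h; rewrite -delta_mul hm ev_mul.
Qed.

Definition tau i := odflt i [pick j | [forall g, ev i (f (delta g)) == th j g]].

Lemma tauP i g : ev i (f (delta g)) = th (tau i) g.
Proof.
rewrite /tau; case: pickP => [j /forallP H /= | none]; first exact/eqP.
exfalso; have [j hj] := tau_ex i; have := none j.
by move/negbT/negP; apply; apply/forallP => h; rewrite hj.
Qed.

Lemma tau_ev i x : ev i (f x) = ev (tau i) x.
Proof.
case: hf => hl _ _ _; rewrite (ev_expand _ _ hl) /ev.
by apply: eq_bigr => g _; rewrite -/(ev _ _) tauP.
Qed.

Lemma f_surj y : exists x, f x = y.
Proof. by case: hf => _ _ _ [g _ gK]; exists (g y). Qed.

Lemma tau_inj : injective tau.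
Proof.
move=> i j hij; apply: th_inj => g.
have [x hx] := f_surj (delta g).
by rewrite -!ev_delta -hx !tau_ev hij.
Qed.

Definition sig i := odflt i [pick j | [forall g, ev j (f (delta g)) == th i g]].

Lemma sigP i g : ev (sig i) (f (delta g)) = th i g.
Proof.
rewrite /sig; case: pickP => [j /forallP H /= | none]; first exact/eqP.
exfalso; have := none (invF tau_inj i).
move/negbT/negP; apply; apply/forallP => h.
by rewrite tauP f_invF.
Qed.

Lemma sig_ev i x : ev (sig i) (f x) = ev i x.
Proof.
rewrite tau_ev; congr (ev _ x); apply: th_inj => g.
by rewrite -tauP sigP.
Qed.

Lemma sig_uniq i j : (forall g, ev j (f (delta g)) = th i g) -> sig i = j.
Proof.
move=> h; apply: tau_inj; apply: th_inj => g.
by rewrite -!tauP h sigP.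
Qed.

Lemma sig_inj : injective sig.
Proof.
by move=> i j hij; apply: th_inj => g; rewrite -sigP hij sigP.
Qed.
End Aut.


Section Mk.
Variable s : Iirr G -> Iirr G.
Hypothesis sinj : injective s.
Hypothesis D : forall g h, exists c : O, \sum_i th (s i) g * th i h = c * #|G|%:R.

Lemma Db u h : exists c : O, \sum_i th (s i) u^-1 * th i h == c * #|G|%:R.
Proof. by have [c hc] := D u^-1 h; exists c; rewrite hc. Qed.
Definition cc u h : O := xchoose (Db u h).
Lemma ccP u h : \sum_i th (s i) u^-1 * th i h = cc u h * #|G|%:R.
Proof. exact/eqP/(xchooseP (Db u h)). Qed.

Definition fmk (x : {ffun gT -> O}) : {ffun gT -> O} := [ffun u => \sum_h x h * cc u h].

Lemma fmk_ev j x : ev (s j) (fmk x) = ev j x.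
Proof.
apply: (mulfI nG0); rewrite /ev /fmk.
transitivity (\sum_h x h * \sum_u (cc u h * #|G|%:R) * th (s j) u).
  rewrite mulr_sumr; under eq_bigr do rewrite ffunE mulr_suml mulr_sumr.
  rewrite exchange_big /=; apply: eq_bigr => h _.
  by rewrite mulr_sumr; apply: eq_bigr => u _; ring.
transitivity (\sum_h x h * \sum_i th i h * \sum_u th (s i) u^-1 * th (s j) u).
  apply: eq_bigr => h _; congr (_ * _).
  under eq_bigr do rewrite -ccP mulr_suml.
  rewrite exchange_big /=; apply: eq_bigr => i _.
  by rewrite mulr_sumr; apply: eq_bigr => u _; ring.
rewrite mulr_sumr; apply: eq_bigr => h _.
under eq_bigr do rewrite row_sum (inj_eq sinj).
rewrite (bigD1 j) //= big1 => [|i /negPf hi]; last by rewrite hi muln0 mulr0.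
by rewrite eqxx muln1 addr0; ring.
Qed.

Lemma s_surj l : exists j, l = s j.
Proof. by exists (invF sinj l); rewrite f_invF. Qed.

Lemma fmk_lin (c : O) (a b : {ffun gT -> O}) :
  fmk [ffun x => c * a x + b x] = [ffun x => c * fmk a x + fmk b x].
Proof.
apply/ffunP => u; rewrite !ffunE mulr_sumr -big_split /=; apply: eq_bigr => h _.
by rewrite ffunE; ring.
Qed.

Lemma fmk_mul a b : fmk (galg_mul a b) = galg_mul (fmk a) (fmk b).
Proof.
apply: ev_inj => l; have [j ->] := s_surj l.
by rewrite !ev_mul !fmk_ev ev_mul.
Qed.

Lemma fmk_one : fmk (galg_one O gT) = galg_one O gT.
Proof.
apply: ev_inj => l; have [j ->] := s_surj l.
by rewrite fmk_ev !ev_one.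
Qed.
End Mk.

Lemma mk_aut (s : Iirr G -> Iirr G) : injective s ->
  (forall g h, exists c : O, \sum_i th (s i) g * th i h = c * #|G|%:R) ->
  exists f, is_alg_aut f /\ forall j x, ev (s j) (f x) = ev j x.
Proof.
move=> sinj D.
pose s' := invF sinj.
have s'inj : injective s' by move=> a b hab; rewrite -(f_invF sinj a) -(f_invF sinj b) -/s' hab.
have D' g h : exists c : O, \sum_i th (s' i) g * th i h = c * #|G|%:R.
  have [c hc] := D h g; exists c; rewrite -hc (reindex_inj sinj) /=.
  by apply: eq_bigr => i _; rewrite /s' invF_f mulrC.
exists (fmk D); split; last exact: fmk_ev.
split; [exact: fmk_lin | exact: fmk_mul | exact: fmk_one |].
exists (fmk D').
  move=> x; apply: ev_inj => j.
  by rewrite -{1}(invF_f sinj j) -/s' (fmk_ev s'inj D') fmk_ev.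
move=> y; apply: ev_inj => l; have [j ->] := s_surj sinj l.
have hj : j = s' (s j) by rewrite /s' invF_f.
by rewrite (fmk_ev sinj D) {1}hj (fmk_ev s'inj D').
Qed.


Lemma comp_aut (f1 f2 : {ffun gT -> O} -> {ffun gT -> O}) :
  is_alg_aut f1 -> is_alg_aut f2 -> is_alg_aut (f1 \o f2).
Proof.
case=> l1 m1 o1 b1 [l2 m2 o2 b2]; split.
- by move=> c a b /=; rewrite l2 l1.
- by move=> a b /=; rewrite m2 m1.
- by rewrite /= o2 o1.
- exact: bij_comp.
Qed.

Definition Fm (f : {ffun gT -> O} -> {ffun gT -> O}) (b : bool) : {ffun Iirr G -> 'CF(G)} :=
  [ffun i => (-1) ^+ b *: 'chi_(sig f i)].

Definition Ps (s : Iirr G -> Iirr G) g h : {poly int} := \sum_i 'X^(kexp (s i) g + kexp i h).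

Lemma Ps_w s g h : pev w (Ps s g h) = \sum_i 'chi_(s i) g * 'chi_i h.
Proof. by rewrite /Ps pev_sum; apply: eq_bigr => i _; rewrite pevXn exprD -!chiE. Qed.

Lemma Ps_z s g h : pev z (Ps s g h) = \sum_i th (s i) g * th i h.
Proof. by rewrite /Ps pev_sum; apply: eq_bigr => i _; rewrite pevXn exprD. Qed.

Lemma Fm_comp f1 f2 b1 b2 : is_alg_aut f1 -> is_alg_aut f2 ->
  Fm (f1 \o f2) (b1 (+) b2) = iso_comp (Fm f1 b1) (Fm f2 b2).
Proof.
move=> h1 h2; apply/ffunP => i; rewrite !ffunE /iso_ext.
have hs : sig (f1 \o f2) i = sig f1 (sig f2 i).
  by apply: (sig_uniq (comp_aut h1 h2)) => g; rewrite /= (sig_ev h1) (sigP h2).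
rewrite hs (bigD1 (sig f2 i)) //= big1 => [|l nl]; last first.
  by rewrite ffunE cfdotZl cfdot_irr eq_sym (negPf nl) mulr0 scale0r.
rewrite !ffunE cfdotZl cfdot_irr eqxx mulr1 addr0 scalerA signr_addb.
by rewrite mulrC.
Qed.

Lemma Fm_inj f1 f2 b1 b2 : is_alg_aut f1 -> is_alg_aut f2 ->
  Fm f1 b1 = Fm f2 b2 -> f1 =1 f2 /\ b1 = b2.
Proof.
move=> h1 h2 E.
have Ei i : (-1) ^+ b1 *: 'chi_(sig f1 i) = (-1) ^+ b2 *: 'chi_(sig f2 i).
  by move/ffunP: E => /(_ i); rewrite !ffunE.
have eb : b1 = b2.
  have := congr1 (fun phi : 'CF(G) => phi 1%g) (Ei 0).
  by rewrite /= !cfunE !lin_char1 ?linG // !mulr1 => /signr_inj.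
subst b2.
have es i : sig f1 i = sig f2 i.
  have := congr1 (fun phi => (-1) ^+ b1 *: phi) (Ei i).
  by rewrite /= !scalerA -signr_addb addbb expr0 !scale1r => /irr_inj.
split => // x; apply: ev_inj => l.
have [j ->] : exists j, l = sig f1 j by exists (invF (sig_inj h1) l); rewrite f_invF.
by rewrite (sig_ev h1) es (sig_ev h2).
Qed.

Variables (p : nat) (pi : O).
Hypothesis pr_p : prime p.
Hypothesis pG : (p.-group [set: gT])%g.
Hypothesis npi : ~~ (pi \is a GRing.unit).
Hypothesis dvpi : dvdr pi (p%:R : O).

Lemma pelt1 (g : gT) : (p^'.-elt g)%g = (g == 1%g).
Proof.
apply/idP/eqP => [pe | ->]; last exact: p_elt1.
have pg : (p.-elt g)%g := mem_p_elt pG (in_setT g).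
by apply/eqP; rewrite -order_eq1; apply/eqP; exact: pnat_1 pg pe.
Qed.

Lemma cardC (g : gT) : #|'C[g]%g| = #|G|.
Proof.
suff -> : 'C[g]%g = [set: gT] by [].
apply/eqP; rewrite eqEsubset subsetT /= sub_cent1.
by apply: (subsetP abG); rewrite inE.
Qed.

Lemma p_integral_sign b x : p_integral p ((-1) ^+ b * x) <-> p_integral p x.
Proof.
split=> [[m [cm hm]] | [m [cm hm]]]; exists m; split => //.
  by move: hm; rewrite mulrCA rpredMsign.
by rewrite mulrCA rpredMsign.
Qed.

Lemma transferG P :
  (exists c, pev z P = c * #|G|%:R) <-> p_integral p (pev w P / #|G|%:R).
Proof.
have cardG : #|G| = (p ^ logn p #|G|)%N := card_pgroup pG.
have : (exponent [set: gT] %| p ^ logn p #|G|)%N by rewrite -cardG exponent_dvdn.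
case/(dvdn_pfactor _ _ pr_p) => k' _ he.
case: k' he => [|k] he.
  have G1 : [set: gT] = [set 1%g].
    apply/setP => x; rewrite !inE; apply/esym/eqP.
    by rewrite -(expg1 x) -[1%N]/(p ^ 0)%N -he expg_exponent ?inE.
  have -> : #|G| = 1%N by rewrite /= G1 cards1.
  rewrite (_ : (1%N%:R : O) = 1) // (_ : (1%N%:R : algC) = 1) // divr1.
  split => _; last by exists (pev z P); rewrite mulr1.
  exists 1%N; split; first exact: coprime1n.
  rewrite mul1r pev_Aint //; apply: (Aint_unity_root (exponent_gt0 [set: gT])).
  by rewrite unity_rootE (prim_expr_order primw).
have primw' : (p ^ k.+1).-primitive_root w by rewrite -he.
have primz' : (p ^ k.+1).-primitive_root z by rewrite -he.
set r := logn p #|G| in cardG *; rewrite cardG natrX.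
rewrite natrX; exact: (@transfer p k pr_p O pi w z P _ npi dvpi primw' primz').
Qed.

Lemma Fm_perf f b : is_alg_aut f -> Perf p (Fm f b).
Proof.
move=> hf; split.
  split => [i | i j]; first by rewrite ffunE rpredZsign irr_vchar.
  rewrite !ffunE cfdotZl cfdotZr rmorph_sign cfdot_irr (inj_eq (sig_inj hf)) mulrA.
  by rewrite -signr_addb addbb expr0 mul1r.
move=> g h.
have muE : iso_mu (Fm f b) g h = (-1) ^+ b * \sum_i 'chi_(sig f i) g * 'chi_i (h^-1)%g.
  by rewrite /iso_mu mulr_sumr; apply: eq_bigr => i _; rewrite ffunE cfunE mulrA.
have hint : p_integral p (iso_mu (Fm f b) g h / #|G|%:R).
  rewrite muE -mulrA p_integral_sign -Ps_w -transferG.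
  exists (f (delta (h^-1)%g) (g^-1)%g); rewrite Ps_z.
  have := inversion (f (delta (h^-1)%g)) (g^-1)%g; rewrite mulrC => ->.
  rewrite [RHS](reindex_inj (sig_inj hf)) /=; apply: eq_bigr => i _.
  by rewrite (sigP hf) invgK mulrC.
split; last by rewrite !cardC; split.
move=> nz; rewrite !pelt1.
have hs : \sum_i 'chi[G]_(sig f i) g = \sum_i 'chi[G]_i g.
  by symmetry; rewrite (reindex_inj (sig_inj hf)).
have [g1 | ng1] := eqVneq g 1%g; have [h1 | nh1] := eqVneq h 1%g => //; exfalso;
  move: nz; rewrite muE.
  rewrite g1; under eq_bigr do rewrite lin_char1 ?linG // mul1r.
  by rewrite chi_sum invg_eq1 (negPf nh1) muln0 mulr0 eqxx.
rewrite h1 invg1; under eq_bigr do rewrite lin_char1 ?linG // mulr1.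
by rewrite hs chi_sum (negPf ng1) muln0 mulr0 eqxx.
Qed.

Lemma Fm_surj I : Perf p I -> exists f b, is_alg_aut f /\ Fm f b = I.
Proof.
case=> [[Iz Io] Ip].
pose bj i := odflt (false, i) [pick bj : bool * Iirr G | I i == (-1) ^+ bj.1 *: 'chi_bj.2].
have hbj i : I i = (-1) ^+ (bj i).1 *: 'chi_(bj i).2.
  rewrite /bj; case: pickP => [x /eqP // | none]; exfalso.
  have n1 : '[I i] = 1 by rewrite Io eqxx.
  have [b [j hj]] := vchar_norm1P (Iz i) n1.
  by have := none (b, j); rewrite /= hj eqxx.
pose sg i := (bj i).2; pose bb i := (bj i).1.
have sinj : injective sg.
  move=> i j hij; apply/eqP; apply: contraT => nij.
  have := Io i j; rewrite !hbj cfdotZl cfdotZr -/(sg i) -/(sg j) hij cfnorm_irr.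
  by rewrite (negPf nij) rmorph_sign mulr1 => /eqP; rewrite mulf_eq0 !signr_eq0.
pose psi := \sum_i (-1) ^+ (bb i) *: 'chi[G]_i.
have psi0 x : x != 1%g -> psi x = 0.
  move=> nx; have [H _] := Ip 1%g (x^-1)%g.
  have : iso_mu I 1%g (x^-1)%g = 0.
    apply/eqP; apply: contraT => /H; rewrite !pelt1 eqxx invg_eq1.
    by rewrite (negPf nx).
  move=> h0; apply: (eq_trans _ h0); rewrite /iso_mu invgK /psi sum_cfunE; apply: eq_bigr => i _.
  by rewrite hbj !cfunE lin_char1 ?linG // mulr1.
have dot j : '[psi, 'chi_j] = (-1) ^+ (bb j).
  rewrite /psi cfdot_suml (bigD1 j) //= big1 => [|i /negPf ni]; last first.
    by rewrite cfdotZl cfdot_irr ni mulr0.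
  by rewrite cfdotZl cfdot_irr eqxx mulr1 addr0.
have dot' j : '[psi, 'chi_j] = #|G|%:R^-1 * psi 1%g.
  rewrite cfdotE (bigD1 1%g) ?group1 //= big1 => [|x /andP[_ nx]]; last first.
    by rewrite psi0 // mul0r.
  by rewrite (lin_char1 (linG j)) conjC1 mulr1 addr0.
have hb j : bb j = bb 0.
  by apply: (@signr_inj algC); rewrite -!dot !dot'.
set b := bb 0 in hb.
have hI i : I i = (-1) ^+ b *: 'chi_(sg i) by rewrite hbj -/(bb i) hb.
have D g h : exists c : O, \sum_i th (sg i) g * th i h = c * #|G|%:R.
  have [_ [H _]] := Ip g (h^-1)%g.
  move: H; rewrite cardC.
  have -> : iso_mu I g (h^-1)%g = (-1) ^+ b * \sum_i 'chi_(sg i) g * 'chi_i h.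
    rewrite /iso_mu mulr_sumr; apply: eq_bigr => i _.
    by rewrite hI cfunE invgK mulrA.
  rewrite -mulrA p_integral_sign -Ps_w -transferG => [[c hc]].
  by exists c; rewrite -Ps_z.
have [f [hf hfe]] := mk_aut sinj D.
exists f, b; split => //; apply/ffunP => i; rewrite !ffunE hI.
congr (_ *: 'chi_ _); apply: (sig_uniq hf) => g.
by rewrite hfe ev_delta.
Qed.

End Chars.

Local Close Scope ring_scope.

Theorem lemma3p2 (p : nat) (O : idomainType) (gT : finGroupType) :
  prime p -> pmodular_ring O p -> large_enough O gT ->
  (abelian [set: gT])%g -> (p.-group [set: gT])%g ->
  exists F : (galg O gT -> galg O gT) -> bool -> {ffun Iirr [set: gT]%G -> 'CF([set: gT]%G)},
    [/\ forall f s, is_alg_aut f -> Perf p (F f s),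
        forall f1 f2 s1 s2, is_alg_aut f1 -> is_alg_aut f2 ->
          F (f1 \o f2) (s1 (+) s2) = iso_comp (F f1 s1) (F f2 s2),
        forall f1 f2 s1 s2, is_alg_aut f1 -> is_alg_aut f2 ->
          F f1 s1 = F f2 s2 -> f1 =1 f2 /\ s1 = s2 &
        forall I, Perf p I -> exists f s, is_alg_aut f /\ F f s = I].
Proof.
move=> pr_p [char0 [pi [[pi0 npi] _ _ dvpi _]]] [z primz] abG pG.
have [w primw] := C_prim_root_exists (exponent_gt0 [set: gT]).
exists (Fm w z); split.
- by move=> f s hf; apply: (Fm_perf abG primw primz char0 pr_p pG npi dvpi s hf).
- by move=> f1 f2 s1 s2 h1 h2; apply: (Fm_comp abG primw primz char0).
- by move=> f1 f2 s1 s2 h1 h2; apply: (Fm_inj abG primw primz char0).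
- by move=> I PI; apply: (Fm_surj abG primw primz char0 pr_p pG npi dvpi PI).
Qed.
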